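(* Fix $\eta\in[0,1]$. The following hold. (1) Baseline policy: for any policy $\mu$, the rules $(\bar Q^\mu,\mu,\eta)$ and $(\bar Q^\mu,\mu^+,\eta)$ are admissible, where $\bar Q^\mu$ is restricted to $\mathcal S_{\mathrm{safe}}\times\mathcal A$ and $\mu^+$ is a greedy policy with $\mu^+(\cdot|s)$ supported on $\arg\min_a\bar Q^\mu(s,a)$. (2) Composite intervention: if $\mathcal G_k=(\bar Q_k,\mu_k,\eta)$ is $\sigma_k$-admissible for $k=1,\dots,K$, define $\bar Q_{\min}(s,a)=\min_k\bar Q_k(s,a)$, let $\mu_{\min}$ be greedy w.r.t. $\bar Q_{\min}$ (supported on $\arg\min_a\bar Q_{\min}(s,a)$) and $\sigma_{\max}=\max_k\sigma_k$; then $(\bar Q_{\min},\mu_{\min},\eta)$ is $\sigma_{\max}$-admissible. (3) Value iteration: let $(\bar{\mathcal T}Q)(s,a)=c(s,a)+\gamma\mathbb E_{s'\sim P(\cdot|s,a)}[\min_{a'}Q(s',a')]$. If $(\bar Q,\mu,\eta)$ is $\sigma$-admissible, then for every $k\ge0$, $(\bar{\mathcal T}^k\bar Q,\mu^k,\eta)$ is $\gamma^k\sigma$-admissible, where $\bar{\mathcal T}$ is applied to the extension of $\bar Q$ to $\mathcal S\times\mathcal A$, the result is restricted to $\mathcal S_{\mathrm{safe}}\times\mathcal A$, and $\mu^k$ is greedy w.r.t. $\bar{\mathcal T}^k\bar Q$. (4) Optimal intervention: if $\bar\pi^*$ is an optimal (cost-minimizing) policy for $\bar{\mathcal M}$ with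 state-action value $\bar Q^*$, then $(\bar Q^*,\bar\pi^*,\eta)$ is admissible. (5) Approximation: if $(\bar Q,\mu,\eta)$ is $\sigma$-admissible and $\hat Q:\mathcal S_{\mathrm{safe}}\times\mathcal A\to[0,\gamma]$ satisfies $\sup_{s\in\mathcal S_{\mathrm{safe}},a\in\mathcal A}|\hat Q(s,a)-\bar Q(s,a)|\le\delta$, then $(\hat Q,\mu,\eta)$ is $(\sigma+(1+\gamma)\delta)$-admissible.
   Context: $\mathcal M=(\mathcal S,\mathcal A,P,r,\gamma)$ is a discounted MDP with discrete state space, discrete action space (all minima over actions are assumed attained), discount $\gamma\in[0,1)$. $\mathcal S$ contains two distinguished states $s_\triangleright,s_\circ$; $\mathcal S_{\mathrm{unsafe}}=\{s_\triangleright,s_\circ\}$, $\mathcal S_{\mathrm{safe}}=\mathcal S\setminus\mathcal S_{\mathrm{unsafe}}$; from $s_\triangleright$ every action leads to $s_\circ$ w.p. 1 and $s_\circ$ is absorbing. Cost $c(s,a)=\mathbb 1\{s=s_\triangleright\}$ and $\bar{\mathcal M}=(\mathcal S,\mathcal A,P,c,\gamma)$. For a stationary policy $\mu$, $\bar Q^\mu(s,a)=\mathbb E[\sum_{t\ge0}\gamma^tc(s_t,a_t)\mid s_0=s,a_0=a]$ along trajectories of $\mu$; $g(s,\mu)=\mathbb E_{a\sim\mu(\cdot|s)}g(s,a)$. Intervention rule: a triple $\mathcal G=(\bar Q,\mu,\eta)$ with backup policy $\mu$, $\eta\in[0,1]$, and $\bar Q:\mathcal S_{\mathrm{safe}}\times\mathcal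 A\to[0,1]$, extended to $\mathcal S\times\mathcal A$ by $\bar Q(s_\triangleright,a)=1$, $\bar Q(s_\circ,a)=0$. It is $\sigma$-admissible ($\sigma\ge0$) if for all $s\in\mathcal S_{\mathrm{safe}},a\in\mathcal A$: $\bar Q(s,a)\in[0,\gamma]$ and $\bar Q(s,a)+\sigma\ge c(s,a)+\gamma\mathbb E_{s'\sim P(\cdot|s,a)}[\bar Q(s',\mu)]$; admissible means $0$-admissible. *)

(* Defs.v *)
From HB Require Import structures.
From mathcomp Require Import all_boot all_order all_algebra.
From mathcomp Require Import all_classical all_reals.
From mathcomp Require Import ereal topology normedtype sequences esum.
Set Implicit Arguments. Unset Strict Implicit. Unset Printing Implicit Defensive.
Import Order.TTheory GRing.Theory Num.Theory.
Local Open Scope ring_scope.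
Local Open Scope classical_set_scope.
Local Open Scope ereal_scope.

(* A discounted MDP with countable ("discrete") state and action spaces.
   Distributions over a countable type are nonnegative functions whose
   (unordered, extended-real) sum [esum] is 1. *)
Record mdp (R : realType) (S A : countType) := MDP {
  P : S -> A -> S -> R;          (* P s a s' = P(s' | s, a) *)
  rew : S -> A -> R;             (* reward r (unused by the cost MDP) *)
  gamma : R;
  s_tri : S;
  s_circ : S;
  P_ge0 : forall s a s', (0 <= P s a s')%R;
  P_sum1 : forall s a, \esum_(s' in [set: S]) (P s a s')%:E = 1;
  gamma_ge0 : (0 <= gamma)%R;
  gamma_lt1 : (gamma < 1)%R;
  tri_neq_circ : s_tri != s_circ;
  P_tri : forall a, P s_tri a s_circ = 1%R;
  P_circ : forall a, P s_circ a s_circ = 1%R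
}.

Section defs.
Variables (R : realType) (S A : countType) (M : mdp R S A).

Definition safe (s : S) : bool := (s != s_tri M) && (s != s_circ M).

Definition cost (s : S) (a : A) : R := if s == s_tri M then 1%R else 0%R.

(* stationary (stochastic) policy: mu s a = mu(a | s) *)
Definition is_policy (mu : S -> A -> R) : Prop :=
  (forall s a, (0 <= mu s a)%R) /\
  (forall s, \esum_(a in [set: A]) (mu s a)%:E = 1).

Definition EP (s : S) (a : A) (f : S -> \bar R) : \bar R :=
  \esum_(s' in [set: S]) (P M s a s')%:E * f s'.

(* g(s, mu) = E_{a ~ mu(.|s)} g(s,a) *)
Definition Epol (g : S -> A -> \bar R) (mu : S -> A -> R) (s : S) : \bar R :=
  \esum_(a in [set: A]) (mu s a)%:E * g s a.

(* distribution of (s_t, a_t) along trajectories of mu from s_0 = s, a_0 = a *)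
Fixpoint occ (mu : S -> A -> R) (s : S) (a : A) (t : nat) : S -> A -> \bar R :=
  match t with
  | O => fun s' a' => if (s' == s) && (a' == a) then 1 else 0
  | t'.+1 => fun s'' a'' =>
      (\esum_(p in [set: (S * A)%type])
          occ mu s a t' p.1 p.2 * (P M p.1 p.2 s'')%:E) * (mu s'' a'')%:E
  end.

(* Qbar^mu(s,a) = E[ sum_t gamma^t c(s_t,a_t) | s_0 = s, a_0 = a ]
               = sum_t gamma^t E[c(s_t,a_t)] *)
Definition Qpi (mu : S -> A -> R) (s : S) (a : A) : \bar R :=
  \sum_(t <oo) ((gamma M) ^+ t)%:E *
     \esum_(p in [set: (S * A)%type]) occ mu s a t p.1 p.2 * (cost p.1 p.2)%:E.

(* extension of Q : S_safe x A -> _ to S x A *)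
Definition ext (Q : S -> A -> \bar R) (s : S) (a : A) : \bar R :=
  if s == s_tri M then 1 else if s == s_circ M then 0 else Q s a.

(* min over actions (assumed attained; written as an infimum) *)
Definition minA (g : A -> \bar R) : \bar R := ereal_inf (range g).

Definition greedy (Q : S -> A -> \bar R) (mu : S -> A -> R) : Prop :=
  forall s a, mu s a != 0%R -> ext Q s a = minA (ext Q s).

Definition admissible (sigma : R) (Q : S -> A -> \bar R) (mu : S -> A -> R)
    (eta : R) : Prop :=
  [/\ (0 <= eta <= 1)%R, is_policy mu &
   forall s a, safe s ->
     0 <= Q s a <= (gamma M)%:E /\
     (cost s a)%:E + (gamma M)%:E * EP s a (Epol (ext Q) mu) <= Q s a + sigma%:E].

Definition Tbar (Q : S -> A -> \bar R) (s : S) (a : A) : \bar R :=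
  (cost s a)%:E + (gamma M)%:E * EP s a (fun s' => minA (Q s')).

Definition Titer (k : nat) (Q : S -> A -> \bar R) : S -> A -> \bar R :=
  iter k (fun Q' => Tbar (ext Q')) Q.

Definition optimal (pis : S -> A -> R) : Prop :=
  is_policy pis /\
  forall pi, is_policy pi -> forall s a, Qpi pis s a <= Qpi pi s a.

Definition Qmin (K : nat) (Qk : 'I_K -> S -> A -> \bar R) (s : S) (a : A) :=
  \big[mine/+oo]_(k < K) Qk k s a.
Definition sigmax (K : nat) (sig : 'I_K -> R) : R :=
  (\big[Num.max/0%R]_(k < K) sig k)%R.

End defs.

(* Main.v *)
Require Import Defs.
From HB Require Import structures.
From mathcomp Require Import all_boot all_order all_algebra.
From mathcomp Require Import all_classical all_reals.
From mathcomp Require Import ereal topology normedtype sequences esum.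
Import Order.TTheory GRing.Theory Num.Theory.
Local Open Scope ring_scope.
Local Open Scope ereal_scope.
From mathcomp Require Import lra.
Section gen.
Context {R : realType}.
Local Open Scope classical_set_scope.
Local Open Scope ereal_scope.

Lemma esumZl (T : choiceType) (I : set T) (r : R) (a : T -> \bar R) :
  (0 <= r)%R -> (forall i, I i -> 0 <= a i) ->
  \esum_(i in I) (r%:E * a i) = r%:E * \esum_(i in I) a i.
Proof.
move=> r0 a0; rewrite /esum -ereal_supZl//; last first.
  by apply/set0P; exists 0; exists set0; [exact: fsets_set0|rewrite fsbig_set0].
congr ereal_sup; apply/seteqP; split.
  move=> _ /= [X [finX XI] <-].
  exists (\sum_(i \in X) a i); first by exists X.
  rewrite !fsbig_finite// big_seq_cond [in RHS]big_seq_cond ge0_sume_distrr// => i.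
  by rewrite andbT in_fset_set// inE => /XI /a0.
move=> _ /= [_ [X [finX XI] <-] <-].
exists X => //.
rewrite !fsbig_finite// big_seq_cond [in RHS]big_seq_cond ge0_sume_distrr// => i.
by rewrite andbT in_fset_set// inE => /XI /a0.
Qed.
End gen.
Section gen2.
Context {R : realType}.
Local Open Scope classical_set_scope.
Local Open Scope ereal_scope.

Lemma esum_delta (T : choiceType) (f : T -> \bar R) (i0 : T) :
  (forall i, i != i0 -> f i = 0) -> 0 <= f i0 ->
  \esum_(i in [set: T]) f i = f i0.
Proof.
move=> f0 fi0.
have fge0 : forall i, [set: T] i -> 0 <= f i.
  by move=> i _; have [->//|/f0->] := eqVneq i i0.
rewrite (esumID [set i0]) // setTI esum_set1// esum1 ?adde0// => i [_ /=].
by move=> /eqP; apply: f0.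
Qed.

Lemma esum_swap (T1 T2 : choiceType) (a : T1 -> T2 -> \bar R) :
  (forall i j, 0 <= a i j) ->
  \esum_(i in [set: T1]) \esum_(j in [set: T2]) a i j =
  \esum_(j in [set: T2]) \esum_(i in [set: T1]) a i j.
Proof.
move=> a0; rewrite !esum_esum//.
rewrite (reindex_esum ([set: T2] `*`` (fun=> [set: T1])) _ (fun x => (x.2, x.1))).
  by [].
split=> //.
- by move=> [i1 i2] [j1 j2] _ _ [] -> ->.
- by move=> [i1 i2] _; exists (i2, i1).
Qed.

Lemma esum_pair (T1 T2 : choiceType) (a : T1 -> T2 -> \bar R) :
  (forall i j, 0 <= a i j) ->
  \esum_(i in [set: T1]) \esum_(j in [set: T2]) a i j =
  \esum_(k in [set: T1 * T2]) a k.1 k.2.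
Proof.
move=> a0; rewrite esum_esum//; congr esum; apply/seteqP; split => //.
Qed.

Variables (T : choiceType) (w : T -> R).
Hypotheses (w0 : forall i, (0 <= w i)%R)
  (w1 : \esum_(i in [set: T]) (w i)%:E = 1).

Definition Ew (f : T -> \bar R) := \esum_(i in [set: T]) (w i)%:E * f i.

Lemma Ew_cst (c : R) : (0 <= c)%R -> Ew (fun=> c%:E) = c%:E.
Proof.
move=> c0; rewrite /Ew; under eq_esum do rewrite muleC.
by rewrite esumZl// ?w1 ?mule1// => i _; rewrite lee_fin.
Qed.

Lemma Ew_ge0 f : (forall i, 0 <= f i) -> 0 <= Ew f.
Proof. by move=> f0; apply: esum_ge0 => i _; rewrite mule_ge0// lee_fin. Qed.

Lemma Ew_le f g : (forall i, 0 <= f i) -> (forall i, f i <= g i) -> Ew f <= Ew g.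
Proof. by move=> f0 fg; apply: le_esum => i _; rewrite lee_wpmul2l// lee_fin. Qed.

Lemma Ew_addc f (c : R) : (forall i, 0 <= f i) -> (0 <= c)%R ->
  Ew (fun i => f i + c%:E) = Ew f + c%:E.
Proof.
move=> f0 c0; rewrite /Ew; under eq_esum do rewrite ge0_muleDr ?lee_fin//.
rewrite esumD; first by rewrite -/(Ew _) -/(Ew _) Ew_cst.
- by move=> i _; rewrite mule_ge0// lee_fin.
- by move=> i _; rewrite mule_ge0// lee_fin.
Qed.

Lemma Ew_le1 f : (forall i, 0 <= f i <= 1) -> 0 <= Ew f <= 1.
Proof.
move=> f01; rewrite Ew_ge0 /=; last by move=> i; case/andP: (f01 i).
rewrite -(@Ew_cst 1%R)//; apply: Ew_le => i; by case/andP: (f01 i).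
Qed.

End gen2.
Arguments Ew {R T} w f.
Arguments Ew_cst {R T w} w0 w1 c.
Arguments Ew_ge0 {R T w} w0 f.
Arguments Ew_le {R T w} w0 f g.
Arguments Ew_addc {R T w} w0 w1 f c.
Arguments Ew_le1 {R T w} w0 w1 f.
Section minA_facts.
Context {R : realType} {A : countType}.
Local Open Scope classical_set_scope.
Local Open Scope ereal_scope.
Implicit Types (g h : A -> \bar R).

Lemma mA_le g a : Defs.minA g <= g a.
Proof. by apply: ereal_inf_lbound; exists a. Qed.

Lemma mA_ge0 g : (forall a, 0 <= g a) -> 0 <= Defs.minA g.
Proof. by move=> g0; apply: le_ereal_inf_tmp => _ [a _ <-]. Qed.

Lemma mA_shift g h (c : R) : (forall a, g a <= h a + c%:E) ->
  Defs.minA g <= Defs.minA h + c%:E.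
Proof.
move=> gh; rewrite -leeBlDr//; apply: le_ereal_inf_tmp => _ [a _ <-].
by rewrite leeBlDr// (le_trans (mA_le g a)).
Qed.

Lemma mA_mono g h : (forall a, g a <= h a) -> Defs.minA g <= Defs.minA h.
Proof.
move=> gh; have := @mA_shift g h 0%R; rewrite adde0; apply=> a.
by rewrite adde0.
Qed.

Lemma dist_inhab (w : A -> R) :
  \esum_(i in [set: A]) (w i)%:E = 1 -> exists a : A, True.
Proof.
move=> w1; apply: contrapT => /forallNP na.
have : \esum_(i in [set: A]) (w i)%:E = 0.
  by apply: esum1 => i _; exfalso; apply: (na i).
by rewrite w1 => /eqP; rewrite onee_eq0.
Qed.

Lemma mA_01 g (a0 : A) : (forall a, 0 <= g a <= 1) -> 0 <= Defs.minA g <= 1.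
Proof.
move=> g01; rewrite mA_ge0 ?(le_trans (mA_le g a0))//; first by case/andP: (g01 a0).
by move=> a; case/andP: (g01 a).
Qed.

Variables (w : A -> R).
Hypotheses (w0 : forall i, (0 <= w i)%R)
  (w1 : \esum_(i in [set: A]) (w i)%:E = 1).

Lemma mA_le_Ew g : (forall a, 0 <= g a <= 1) -> Defs.minA g <= Ew w g.
Proof.
move=> g01; have [a0 _] := @dist_inhab w w1.
have /andP[m0 m1] := @mA_01 g a0 g01.
have mfin : Defs.minA g \is a fin_num by rewrite ge0_fin_numE// (le_lt_trans m1)// ltry.
rewrite -(fineK mfin) -(Ew_cst w0 w1) ?fine_ge0//.
apply: (Ew_le w0) => a; first by rewrite fineK.
by rewrite fineK// mA_le.
Qed.

Lemma Ew_greedy g : (forall a, 0 <= g a <= 1) ->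
  (forall a, w a != 0%R -> g a = Defs.minA g) -> Ew w g = Defs.minA g.
Proof.
move=> g01 gr; have [a0 _] := @dist_inhab w w1.
have /andP[m0 m1] := @mA_01 g a0 g01.
have mfin : Defs.minA g \is a fin_num by rewrite ge0_fin_numE// (le_lt_trans m1)// ltry.
rewrite -[RHS](fineK mfin) -(Ew_cst w0 w1) ?fine_ge0//.
apply: eq_esum => a _; have [->|/gr ->] := eqVneq (w a) 0%R.
  by rewrite !mul0e.
by rewrite fineK.
Qed.

End minA_facts.
Section gen3.
Context {R : realType}.
Local Open Scope classical_set_scope.
Local Open Scope ereal_scope.

Lemma esumZr (T : choiceType) (I : set T) (r : R) (a : T -> \bar R) :
  (0 <= r)%R -> (forall i, I i -> 0 <= a i) ->
  \esum_(i in I) (a i * r%:E) = (\esum_(i in I) a i) * r%:E.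
Proof.
move=> r0 a0; rewrite muleC -esumZl//; apply: eq_esum => i _; exact: muleC.
Qed.

Lemma xfer (T1 T2 : choiceType) (k : T1 -> R) (F : T1 -> T2 -> \bar R)
    (h : T2 -> R) :
  (forall q, (0 <= k q)%R) -> (forall q p, 0 <= F q p) -> (forall p, (0 <= h p)%R) ->
  \esum_(p in [set: T2]) ((\esum_(q in [set: T1]) (k q)%:E * F q p) * (h p)%:E) =
  \esum_(q in [set: T1]) (k q)%:E * \esum_(p in [set: T2]) (F q p * (h p)%:E).
Proof.
move=> k0 F0 h0.
have -> : \esum_(p in [set: T2]) ((\esum_(q in [set: T1]) (k q)%:E * F q p) * (h p)%:E)
  = \esum_(p in [set: T2]) \esum_(q in [set: T1]) ((k q)%:E * (F q p * (h p)%:E)).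
  apply: eq_esum => p _; rewrite -esumZr//; last first.
    by move=> q _; rewrite mule_ge0// lee_fin.
  by apply: eq_esum => q _; rewrite muleA.
rewrite esum_swap; last by move=> p q; rewrite !mule_ge0// lee_fin.
apply: eq_esum => q _; rewrite esumZl// => p _; by rewrite mule_ge0// lee_fin.
Qed.
End gen3.
Section mdp_facts.
Context {R : realType} {S A : countType} (M : mdp R S A).
Local Open Scope classical_set_scope.
Local Open Scope ereal_scope.

Lemma P_point s a s0 s' : P M s a s0 = 1%R -> s' != s0 -> P M s a s' = 0%R.
Proof.
move=> P1 ns.
have h : (P M s a s0)%:E + (P M s a s')%:E <= 1.
  rewrite -(P_sum1 M s a) (esumID [set s0]); last by move=> i _; rewrite lee_fin P_ge0.
  rewrite setTI esum_set1 ?lee_fin ?P_ge0//; apply: leeD2l.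
  apply: esum_ge; exists [set s'].
    split; first exact: finite_set1.
    by move=> i /= ->; split => //; apply/eqP.
  by rewrite fsbig_set1.
move: h; rewrite P1 -EFinD lee_fin => h.
by apply/eqP; rewrite eq_le P_ge0 andbT; rewrite -(lerD2l 1%R) addr0.
Qed.

Lemma P_circ0 a s' : s' != s_circ M -> P M (s_circ M) a s' = 0%R.
Proof. by apply: P_point; apply: P_circ. Qed.

Lemma P_tri0 a s' : s' != s_circ M -> P M (s_tri M) a s' = 0%R.
Proof. by apply: P_point; apply: P_tri. Qed.

Lemma cost_ge0 s a : (0 <= cost M s a)%R.
Proof. by rewrite /cost; case: ifP. Qed.

Lemma cost_circ a : cost M (s_circ M) a = 0%R.
Proof. by rewrite /cost eq_sym (negPf (tri_neq_circ M)). Qed.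

Lemma cost_tri a : cost M (s_tri M) a = 1%R.
Proof. by rewrite /cost eqxx. Qed.

Lemma cost_ntri s a : s != s_tri M -> cost M s a = 0%R.
Proof. by rewrite /cost => /negPf ->. Qed.

Lemma P_dist s a : \esum_(i in [set: S]) (P M s a i)%:E = 1.
Proof. exact: P_sum1. Qed.

Variable mu : S -> A -> R.
Hypothesis hmu : is_policy mu.

Definition K s a (q : S * A) : R := (P M s a q.1 * mu q.1 q.2)%R.

Lemma K_ge0 s a q : (0 <= K s a q)%R.
Proof. by rewrite /K mulr_ge0// ?P_ge0//; case: hmu. Qed.

Lemma conv s a (g : S -> A -> \bar R) : (forall s a, 0 <= g s a) ->
  EP M s a (Epol g mu) = \esum_(q in [set: S * A]) (K s a q)%:E * g q.1 q.2.
Proof.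
move=> g0; rewrite /EP /Epol.
have mu0 : forall s a, (0 <= mu s a)%R by case: hmu.
transitivity (\esum_(i in [set: S]) \esum_(j in [set: A])
   ((K s a (i, j))%:E * g i j)).
  apply: eq_esum => i _; rewrite -esumZl ?P_ge0//; last first.
    by move=> j _; rewrite mule_ge0// lee_fin.
  by apply: eq_esum => j _; rewrite muleA.
by rewrite esum_pair// => i j; rewrite mule_ge0// lee_fin K_ge0.
Qed.

Lemma K_sum1 s a : \esum_(q in [set: S * A]) (K s a q)%:E = 1.
Proof.
have := conv s a (fun _ _ => 1) (fun _ _ => lee01).
under [in RHS]eq_esum do rewrite mule1.
move=> <-; rewrite /EP /Epol.
have [_ mu1] := hmu.
transitivity (\esum_(i in [set: S]) (P M s a i)%:E); last exact: P_sum1.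
apply: eq_esum => i _; rewrite -[RHS]mule1; congr (_ * _).
by under eq_esum do rewrite mule1; exact: mu1.
Qed.

End mdp_facts.
Section occ_facts.
Context {R : realType} {S A : countType} (M : mdp R S A).
Local Open Scope classical_set_scope.
Local Open Scope ereal_scope.
Variable mu : S -> A -> R.
Hypothesis hmu : is_policy mu.
Let mu0 : forall s a, (0 <= mu s a)%R. Proof. by case: hmu. Qed.
Let Kq := K M mu.

Lemma occ_ge0 s a t x y : 0 <= occ M mu s a t x y.
Proof.
elim: t x y => [|t IH] x y /=; first by case: ifP.
rewrite mule_ge0 ?lee_fin//; apply: esum_ge0 => p _.
by rewrite mule_ge0// lee_fin P_ge0.
Qed.

Lemma occS s a t x y : occ M mu s a t.+1 x y =
  (\esum_(p in [set: S * A]) occ M mu s a t p.1 p.2 * (P M p.1 p.2 x)%:E) * (mu x y)%:E.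
Proof. by []. Qed.

Lemma occ_first s a t x y :
  occ M mu s a t.+1 x y =
  \esum_(q in [set: S * A]) (Kq s a q)%:E * occ M mu q.1 q.2 t x y.
Proof.
elim: t x y => [|t IH] x y.
  rewrite /= (@esum_delta _ _ _ (s, a)); last first.
  - by rewrite /= !eqxx mul1e lee_fin P_ge0.
  - by move=> [x' y'] /=; rewrite xpair_eqE => /negPf ->; rewrite mul0e.
  rewrite /= !eqxx mul1e (@esum_delta _ _ _ (x, y)); last first.
  - by rewrite /= !eqxx mule1 lee_fin K_ge0.
  - move=> [x' y'] /= H; case: ifP => [/andP[/eqP ex /eqP ey]|_]; last by rewrite mule0.
    by move: H; rewrite -ex -ey eqxx.
  by rewrite /= !eqxx mule1 /Kq /K /= EFinM.
rewrite [LHS]occS.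
under eq_esum do rewrite IH.
rewrite xfer; last first.
- by move=> p; rewrite P_ge0.
- by move=> q p; exact: occ_ge0.
- by move=> q; exact: K_ge0.
rewrite -esumZr//; last first.
  by move=> q _; rewrite mule_ge0// ?lee_fin ?K_ge0// esum_ge0// => p _; rewrite mule_ge0 ?occ_ge0// lee_fin P_ge0.
by apply: eq_esum => q _; rewrite -muleA.
Qed.

Definition fc s a t := \esum_(p in [set: S * A]) occ M mu s a t p.1 p.2 * (cost M p.1 p.2)%:E.

Lemma fc_ge0 s a t : 0 <= fc s a t.
Proof. by apply: esum_ge0 => p _; rewrite mule_ge0 ?occ_ge0// lee_fin cost_ge0. Qed.

Lemma fc0 s a : fc s a 0 = (cost M s a)%:E.
Proof.
rewrite /fc (@esum_delta _ _ _ (s, a)) /=; first by rewrite !eqxx mul1e.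
  by move=> [x' y'] /=; rewrite xpair_eqE => /negPf ->; rewrite mul0e.
by rewrite !eqxx mul1e lee_fin cost_ge0.
Qed.

Lemma fcS s a t : fc s a t.+1 = \esum_(q in [set: S * A]) (Kq s a q)%:E * fc q.1 q.2 t.
Proof.
rewrite /fc; under eq_esum do rewrite occ_first.
rewrite xfer //.
- by move=> q; exact: K_ge0.
- by move=> q p; exact: occ_ge0.
- by move=> p; exact: cost_ge0.
Qed.

End occ_facts.
Section qpi_facts.
Context {R : realType} {S A : countType} (M : mdp R S A).
Local Open Scope classical_set_scope.
Local Open Scope ereal_scope.
Variable mu : S -> A -> R.
Hypothesis hmu : is_policy mu.
Let mu0 : forall s a, (0 <= mu s a)%R. Proof. by case: hmu. Qed.
Let Kq := K M mu.
Let g0 : (0 <= gamma M)%R := gamma_ge0 M.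

Lemma KY_unsafe s a (Y : S * A -> \bar R) : (s = s_tri M \/ s = s_circ M) ->
  (forall a', Y (s_circ M, a') = 0) ->
  \esum_(q in [set: S * A]) (Kq s a q)%:E * Y q = 0.
Proof.
move=> hs Y0; apply: esum1 => -[x y] _ /=.
have [->|nx] := eqVneq x (s_circ M); first by rewrite Y0 mule0.
rewrite /Kq /K /=; case: hs => ->; first by rewrite P_tri0 // mul0r mul0e.
by rewrite P_circ0 // mul0r mul0e.
Qed.

Lemma fc_circ a t : fc M mu (s_circ M) a t = 0.
Proof.
elim: t a => [|t IH] a; first by rewrite fc0 cost_circ.
by rewrite fcS // (@KY_unsafe _ _ (fun q => fc M mu q.1 q.2 t)) //; right.
Qed.

Lemma Qpi_fc s a : Qpi M mu s a = \sum_(t <oo) ((gamma M) ^+ t)%:E * fc M mu s a t.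
Proof. by []. Qed.

Lemma bellman s a : Qpi M mu s a =
  (cost M s a)%:E + (gamma M)%:E *
     \esum_(q in [set: S * A]) (Kq s a q)%:E * Qpi M mu q.1 q.2.
Proof.
have ge0 : forall t s a, 0 <= ((gamma M) ^+ t)%:E * fc M mu s a t.
  by move=> t s' a'; rewrite mule_ge0 ?lee_fin ?exprn_ge0// fc_ge0.
rewrite Qpi_fc (nneseries_recl (fun k _ => ge0 k s a))//.
rewrite expr0 mul1e fc0; congr (_ + _).
rewrite -nneseries_addn; last by move=> i; apply: ge0.
transitivity (\sum_(i <oo) ((gamma M)%:E * \esum_(q in [set: S * A])
    (Kq s a q)%:E * (((gamma M) ^+ i)%:E * fc M mu q.1 q.2 i))).
  apply: eq_eseriesr => i _; rewrite addn1 exprS EFinM -muleA fcS //; congr (_ * _).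
  rewrite -esumZl ?exprn_ge0//; last first.
    by move=> q _; rewrite mule_ge0 ?lee_fin ?K_ge0// fc_ge0.
  by apply: eq_esum => q _; rewrite muleCA.
rewrite nneseriesZl; last first.
  by move=> i _; apply: esum_ge0 => q _; rewrite mule_ge0 ?lee_fin ?K_ge0.
congr (_ * _).
rewrite nneseries_esumT; last first.
  by move=> i; apply: esum_ge0 => q _; rewrite mule_ge0 ?lee_fin ?K_ge0.
rewrite esum_swap; last by move=> i q; rewrite mule_ge0 ?lee_fin ?K_ge0.
apply: eq_esum => q _; rewrite esumZl ?K_ge0//; congr (_ * _).
by rewrite Qpi_fc nneseries_esumT.
Qed.

End qpi_facts.
Section qpi_facts2.
Context {R : realType} {S A : countType} (M : mdp R S A).
Local Open Scope classical_set_scope.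
Local Open Scope ereal_scope.
Variable mu : S -> A -> R.
Hypothesis hmu : is_policy mu.
Let Kq := K M mu.
Let g0 : (0 <= gamma M)%R := gamma_ge0 M.

Let gt t s a := ((gamma M) ^+ t)%:E * fc M mu s a t.
Let gt_ge0 t s a : 0 <= gt t s a.
Proof. by rewrite mule_ge0 ?lee_fin ?exprn_ge0// fc_ge0. Qed.

Definition V n s a := \sum_(0 <= t < n) gt t s a.

Lemma V_circ n a : V n (s_circ M) a = 0.
Proof. by rewrite /V big1// => t _; rewrite /gt fc_circ// mule0. Qed.

Lemma V_ge0 n s a : 0 <= V n s a.
Proof. by apply: sume_ge0 => t _; exact: gt_ge0. Qed.

Lemma VS n s a : V n.+1 s a = (cost M s a)%:E + (gamma M)%:E *
   \esum_(q in [set: S * A]) (Kq s a q)%:E * V n q.1 q.2.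
Proof.
rewrite /V big_nat_recl// {1}/gt expr0 mul1e fc0; congr (_ + _).
transitivity (\sum_(0 <= i < n) ((gamma M)%:E * \esum_(q in [set: S * A])
    (Kq s a q)%:E * gt i q.1 q.2)).
  apply: eq_bigr => i _; rewrite /gt exprS EFinM -muleA fcS //; congr (_ * _).
  rewrite -esumZl ?exprn_ge0//; last first.
    by move=> q _; rewrite mule_ge0 ?lee_fin ?K_ge0// fc_ge0.
  by apply: eq_esum => q _; rewrite muleCA.
rewrite -ge0_sume_distrr; last first.
  by move=> i _; apply: esum_ge0 => q _; rewrite mule_ge0 ?lee_fin ?K_ge0.
congr (_ * _).
rewrite -esum_sum; last by move=> q i _ _; rewrite mule_ge0 ?lee_fin ?K_ge0.
by apply: eq_esum => q _; rewrite ge0_sume_distrr//.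
Qed.

Lemma V_le1 n s a : V n s a <= 1.
Proof.
elim: n s a => [|n IH] s a; first by rewrite /V big_geq.
rewrite VS; have [->|ns] := eqVneq s (s_tri M).
  rewrite cost_tri (@KY_unsafe _ _ _ M mu) ?mule0 ?adde0//; first by left.
  by move=> a'; rewrite /= V_circ.
rewrite cost_ntri// add0e.
have /andP[_ h1] := @Ew_le1 _ _ (Kq s a) (fun q => K_ge0 M mu hmu s a q) (K_sum1 M mu hmu s a)
   (fun q => V n q.1 q.2) (fun q => introT andP (conj (V_ge0 n q.1 q.2) (IH q.1 q.2))).
apply: (le_trans (lee_wpmul2l _ h1)); first by rewrite lee_fin.
by rewrite mule1 lee_fin ltW// gamma_lt1.
Qed.

End qpi_facts2.
Section qpi_facts3.
Context {R : realType} {S A : countType} (M : mdp R S A).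
Local Open Scope classical_set_scope.
Local Open Scope ereal_scope.
Variable mu : S -> A -> R.
Hypothesis hmu : is_policy mu.
Let Kq := K M mu.

Let gt_ge0 t s a : 0 <= ((gamma M) ^+ t)%:E * fc M mu s a t.
Proof. by rewrite mule_ge0 ?lee_fin ?exprn_ge0 ?gamma_ge0// fc_ge0. Qed.

Lemma Qpi_ge0 s a : 0 <= Qpi M mu s a.
Proof. by rewrite Qpi_fc; apply: nneseries_ge0 => t _ _; exact: gt_ge0. Qed.

Lemma Qpi_le1 s a : Qpi M mu s a <= 1.
Proof.
rewrite Qpi_fc; apply: lime_le.
  by apply: is_cvg_nneseries => t _ _; exact: gt_ge0.
by apply: nearW => n; have := V_le1 M mu hmu n s a.
Qed.

Lemma Qpi_circ a : Qpi M mu (s_circ M) a = 0.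
Proof.
by rewrite Qpi_fc eseries0// => t _ _; rewrite fc_circ// mule0.
Qed.

Lemma Qpi_tri a : Qpi M mu (s_tri M) a = 1.
Proof.
rewrite bellman// cost_tri (@KY_unsafe _ _ _ M mu) ?mule0 ?adde0//; first by left.
by move=> a'; rewrite /= Qpi_circ.
Qed.

Lemma ext_Qpi : ext M (Qpi M mu) = Qpi M mu.
Proof.
apply/funext => s; apply/funext => a; rewrite /ext.
case: eqP => [->|_]; first by rewrite Qpi_tri.
by case: eqP => [->|_]; first by rewrite Qpi_circ.
Qed.

Lemma Qpi_ntri s a : s != s_tri M -> Qpi M mu s a <= (gamma M)%:E.
Proof.
move=> ns; rewrite bellman// cost_ntri// add0e.
have /andP[_ h1] := @Ew_le1 _ _ (Kq s a) (fun q => K_ge0 M mu hmu s a q) (K_sum1 M mu hmu s a)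
   (fun q => Qpi M mu q.1 q.2) (fun q => introT andP (conj (Qpi_ge0 q.1 q.2) (Qpi_le1 q.1 q.2))).
apply: (le_trans (lee_wpmul2l _ h1)); first by rewrite lee_fin gamma_ge0.
by rewrite mule1.
Qed.

Lemma Qpi_EP s a : (cost M s a)%:E + (gamma M)%:E * EP M s a (Epol (ext M (Qpi M mu)) mu)
   = Qpi M mu s a.
Proof.
rewrite ext_Qpi conv//; first by rewrite -bellman.
by move=> s' a'; exact: Qpi_ge0.
Qed.

End qpi_facts3.
Section part1.
Context {R : realType} {S A : countType} (M : mdp R S A).
Local Open Scope classical_set_scope.
Local Open Scope ereal_scope.

Lemma Epol_Ew (g : S -> A -> \bar R) mu s : Epol g mu s = Ew (mu s) (g s).
Proof. by []. Qed.
Lemma EP_Ew s a f : EP M s a f = Ew (P M s a) f.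
Proof. by []. Qed.

Lemma safe_ntri s : safe M s -> s != s_tri M.
Proof. by case/andP. Qed.

Lemma part1a mu eta : (0 <= eta <= 1)%R -> is_policy mu ->
  admissible M 0 (Qpi M mu) mu eta.
Proof.
move=> heta hmu; split => // s a /safe_ntri ns; split.
  by rewrite Qpi_ge0// Qpi_ntri.
by rewrite Qpi_EP// adde0.
Qed.

Lemma part1b mu eta mup : (0 <= eta <= 1)%R -> is_policy mu -> is_policy mup ->
  greedy M (Qpi M mu) mup -> admissible M 0 (Qpi M mu) mup eta.
Proof.
move=> heta hmu hmup gr; split => // s a /safe_ntri ns; split.
  by rewrite Qpi_ge0// Qpi_ntri.
rewrite adde0 -[X in _ <= X](Qpi_EP M mu hmu) leeD2l// lee_wpmul2l ?lee_fin ?gamma_ge0//.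
rewrite ext_Qpi// !EP_Ew; apply: Ew_le.
- by move=> s'; exact: P_ge0.
- by move=> s'; apply: esum_ge0 => a' _; rewrite mule_ge0 ?lee_fin ?Qpi_ge0//; case: hmup.
move=> s'; rewrite !Epol_Ew.
have [mup0 mup1] := hmup; have [mu0 mu1] := hmu.
have g01 : forall a', 0 <= Qpi M mu s' a' <= 1 by move=> a'; rewrite Qpi_ge0// Qpi_le1.
rewrite (@Ew_greedy _ _ (mup s') (mup0 s') (mup1 s') _ g01).
  exact: (@mA_le_Ew _ _ (mu s') (mu0 s') (mu1 s') _ g01).
by move=> a' /gr; rewrite ext_Qpi.
Qed.

End part1.
Section parts.
Context {R : realType} {S A : countType} (M : mdp R S A).
Local Open Scope classical_set_scope.
Local Open Scope ereal_scope.

Lemma fin_bnd {x : \bar R} {c : R} : 0 <= x -> x <= c%:E -> exists r : R, x = r%:E.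
Proof. by case: x => [r| |] // _ _; exists r. Qed.

Lemma gamma_le1 : (gamma M <= 1)%R.
Proof. exact/ltW/gamma_lt1. Qed.

Lemma ext_01 {Q : S -> A -> \bar R} :
  (forall s a, safe M s -> 0 <= Q s a <= (gamma M)%:E) ->
  forall s a, 0 <= ext M Q s a <= 1.
Proof.
move=> HQ s a; rewrite /ext; case: ifPn => [_|nt]; first by rewrite lee01 lexx.
case: ifPn => [_|nc]; first by rewrite lexx lee01.
have /andP[-> h] := HQ s a (introT andP (conj nt nc)).
by rewrite (le_trans h)// lee_fin gamma_le1.
Qed.

Lemma ext_safe (Q : S -> A -> \bar R) s a : safe M s -> ext M Q s a = Q s a.
Proof. by case/andP => /negPf ht /negPf hc; rewrite /ext ht hc. Qed.

Lemma Epol_01 {Q : S -> A -> \bar R} {mu} s : is_policy mu ->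
  (forall s a, safe M s -> 0 <= Q s a <= (gamma M)%:E) ->
  0 <= Epol (ext M Q) mu s <= 1.
Proof.
move=> [mu0 mu1] HQ; rewrite Epol_Ew; apply: (Ew_le1 (mu0 s) (mu1 s)).
by move=> a; exact: ext_01.
Qed.

Lemma EP_01 s a (f : S -> \bar R) : (forall s', 0 <= f s' <= 1) -> 0 <= EP M s a f <= 1.
Proof.
move=> f01; rewrite EP_Ew; apply: (Ew_le1 (P_ge0 M s a) (P_sum1 M s a)) => s'.
exact: f01.
Qed.

Lemma part5 (sigma delta : R) Q mu (Qhat : S -> A -> \bar R) eta :
  (0 <= sigma)%R -> admissible M sigma Q mu eta ->
  (forall s a, safe M s -> 0 <= Qhat s a <= (gamma M)%:E) ->
  ereal_sup [set `|Qhat p.1 p.2 - Q p.1 p.2| | p in [set p : S * A | safe M p.1]]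
    <= delta%:E ->
  admissible M (sigma + (1 + gamma M) * delta)%R Qhat mu eta.
Proof.
move=> s0 [heta hmu H] Hhat hsup; split => // s a ss; split; first exact: Hhat.
have [mu0 mu1] := hmu.
have HQ : forall s a, safe M s -> 0 <= Q s a <= (gamma M)%:E.
  by move=> s1 a1 ss1; case: (H s1 a1 ss1).
have dif : forall s a, safe M s -> Qhat s a <= Q s a + delta%:E /\ Q s a <= Qhat s a + delta%:E.
  move=> s1 a1 ss1.
  have habs : `|Qhat s1 a1 - Q s1 a1| <= delta%:E.
    apply: le_trans hsup; apply: ereal_sup_ubound; by exists (s1, a1).
  have /andP[q0 q1] := HQ _ a1 ss1; have /andP[h0 h1] := Hhat _ a1 ss1.
  have [q eq] := fin_bnd q0 q1; have [h eh] := fin_bnd h0 h1.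
  move: habs; rewrite eq eh -EFinB /= !lee_fin => /ler_normlP [] ? ?.
  split; lra.
have d0 : (0 <= delta)%R.
  have [h _] := dif s a ss.
  have /andP[q0 q1] := HQ _ a ss; have /andP[h0 h1] := Hhat _ a ss.
  have [q eq] := fin_bnd q0 q1; have [h' eh] := fin_bnd h0 h1.
  have habs : `|Qhat s a - Q s a| <= delta%:E.
    apply: le_trans hsup; apply: ereal_sup_ubound; by exists (s, a).
  by move: habs; rewrite eq eh -EFinB /= lee_fin => /(le_trans (normr_ge0 _)).
have [_ Hs] := H s a ss.
have extle : forall s' a', ext M Qhat s' a' <= ext M Q s' a' + delta%:E.
  move=> s' a'; rewrite /ext; case: ifPn => ht.
    by rewrite leeDl// lee_fin.
  case: ifPn => hc; first by rewrite add0e lee_fin.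
  exact: (dif s' a' (introT andP (conj ht hc))).1.
have HQh : forall s a, safe M s -> 0 <= Qhat s a <= (gamma M)%:E by [].
have e1 : forall s', Epol (ext M Qhat) mu s' <= Epol (ext M Q) mu s' + delta%:E.
  move=> s'; rewrite !Epol_Ew -(Ew_addc (mu0 s') (mu1 s')) //; last first.
    by move=> a'; have /andP[] := ext_01 HQ s' a'.
  apply: (Ew_le (mu0 s')) => // a'; by have /andP[] := ext_01 HQh s' a'.
have e2 : EP M s a (Epol (ext M Qhat) mu) <= EP M s a (Epol (ext M Q) mu) + delta%:E.
  rewrite !EP_Ew -(Ew_addc (P_ge0 M s a) (P_sum1 M s a)) //; last first.
    by move=> s'; have /andP[] := Epol_01 s' hmu HQ.
  apply: (Ew_le (P_ge0 M s a)) => // s'; by have /andP[] := Epol_01 s' hmu HQh.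
have /andP[x0 x1] := EP_01 s a _ (fun s' => Epol_01 s' hmu HQ).
have /andP[y0 y1] := EP_01 s a _ (fun s' => Epol_01 s' hmu HQh).
have [x ex] := fin_bnd x0 x1; have [y ey] := fin_bnd y0 y1.
have /andP[q0 q1] := HQ _ a ss; have /andP[h0 h1] := Hhat _ a ss.
have [q eq] := fin_bnd q0 q1; have [h eh] := fin_bnd h0 h1.
have [_ dq] := dif s a ss.
move: Hs e2 dq; rewrite ex ey eq eh -!EFinM -!EFinD !lee_fin => Hs e2 dq.
have gg := gamma_ge0 M; have gl := gamma_le1.
nra.
Qed.

End parts.
Section parts23.
Context {R : realType} {S A : countType} (M : mdp R S A).
Local Open Scope classical_set_scope.
Local Open Scope ereal_scope.

Lemma TiterS k Q : Titer M k.+1 Q = Tbar M (ext M (Titer M k Q)).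
Proof. by []. Qed.

Lemma TiterSa k Q s a : Titer M k.+1 Q s a = Tbar M (ext M (Titer M k Q)) s a.
Proof. by []. Qed.

Lemma part3 (sigma : R) Q mu eta : (0 <= sigma)%R -> admissible M sigma Q mu eta ->
  forall (k : nat) muk, is_policy muk -> greedy M (Titer M k Q) muk ->
  admissible M ((gamma M ^+ k) * sigma)%R (Titer M k Q) muk eta.
Proof.
move=> s0 [heta hmu H] k muk hmuk grk.
have [mu0 mu1] := hmu; have [muk0 muk1] := hmuk.
have [a0 _] := @dist_inhab _ _ (mu (s_tri M)) (mu1 _).
have gg := gamma_ge0 M; have gl := @gamma_le1 _ _ _ M.
have HQ : forall s a, safe M s -> 0 <= Q s a <= (gamma M)%:E.
  by move=> s1 a1 ss1; case: (H s1 a1 ss1).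
have B : forall k s a, safe M s -> 0 <= Titer M k Q s a <= (gamma M)%:E.
  elim=> [|j IH] s a ss; first exact: HQ.
  rewrite TiterS /Tbar cost_ntri ?safe_ntri// add0e.
  have /andP[x0 x1] := EP_01 M s a _ (fun s' => mA_01 _ a0 (ext_01 M IH s')).
  rewrite mule_ge0 ?lee_fin//=.
  by apply: (le_trans (lee_wpmul2l _ x1)); rewrite ?lee_fin// mulr1.
have D : forall k s a, safe M s ->
    Titer M k.+1 Q s a <= Titer M k Q s a + ((gamma M ^+ k) * sigma)%:E.
  elim=> [|j IH] s a ss.
    rewrite expr0 mul1r TiterS /Tbar.
    have [_ Hs] := H s a ss; apply: le_trans Hs; rewrite leeD2l//.
    rewrite lee_wpmul2l ?lee_fin// !EP_Ew.
    apply: (Ew_le (P_ge0 M s a)) => s'.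
      by have /andP[] := mA_01 _ a0 (ext_01 M HQ s').
    exact: (@mA_le_Ew _ _ (mu s') (mu0 s') (mu1 s') _ (ext_01 M HQ s')).
  rewrite [X in X <= _]TiterSa [X in _ <= X + _]TiterSa /Tbar.
  have c0 : (0 <= gamma M ^+ j * sigma)%R by rewrite mulr_ge0// exprn_ge0.
  have e1 : forall s', Defs.minA (ext M (Titer M j.+1 Q) s') <=
      Defs.minA (ext M (Titer M j Q) s') + ((gamma M ^+ j) * sigma)%:E.
    move=> s'; apply: mA_shift => a'.
    have [ss'|ns'] := boolP (safe M s').
      by rewrite !ext_safe//; exact: IH.
    move: ns'; rewrite /safe /ext negb_and !negbK.
    by case: ifP => _ //=; [rewrite leeDl// lee_fin|move=> ->; rewrite add0e lee_fin].
  have e2 : EP M s a (fun s' => Defs.minA (ext M (Titer M j.+1 Q) s')) <=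
      EP M s a (fun s' => Defs.minA (ext M (Titer M j Q) s')) + ((gamma M ^+ j) * sigma)%:E.
    rewrite !EP_Ew -(Ew_addc (P_ge0 M s a) (P_sum1 M s a)) //; last first.
      by move=> s'; have /andP[] := mA_01 _ a0 (ext_01 M (B j) s').
    apply: (Ew_le (P_ge0 M s a)) => // s'.
    by have /andP[] := mA_01 _ a0 (ext_01 M (B j.+1) s').
  have /andP[x0 x1] := EP_01 M s a _ (fun s' => mA_01 _ a0 (ext_01 M (B j) s')).
  have /andP[y0 y1] := EP_01 M s a _ (fun s' => mA_01 _ a0 (ext_01 M (B j.+1) s')).
  have [x ex] := fin_bnd x0 x1; have [y ey] := fin_bnd y0 y1.
  move: e2; rewrite ex ey -!EFinM -!EFinD !lee_fin exprS => e2.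
  have := cost_ge0 M s a; nra.
split => // s a ss; split; first exact: B.
apply: le_trans (D k s a ss); rewrite TiterS /Tbar leeD2l// lee_wpmul2l ?lee_fin//.
rewrite le_eqVlt; apply/orP; left; apply/eqP; apply: eq_esum => s' _.
congr (_ * _); rewrite Epol_Ew.
apply: (@Ew_greedy _ _ (muk s') (muk0 s') (muk1 s') _ (ext_01 M (B k) s')).
by move=> a' /grk.
Qed.

End parts23.
Section part2s.
Context {R : realType} {S A : countType} (M : mdp R S A).
Local Open Scope classical_set_scope.
Local Open Scope ereal_scope.

Lemma part2 (K : nat) (Qk : 'I_K -> S -> A -> \bar R) (muk : 'I_K -> S -> A -> R)
    (sig : 'I_K -> R) eta : (0 <= eta <= 1)%R ->
  (0 < K)%N -> (forall k, (0 <= sig k)%R) ->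
  (forall k, admissible M (sig k) (Qk k) (muk k) eta) ->
  forall mumin, is_policy mumin -> greedy M (Qmin Qk) mumin ->
    admissible M (sigmax sig) (Qmin Qk) mumin eta.
Proof.
move=> heta K0 sig0 Hk mumin hmin gr.
have [mm0 mm1] := hmin.
have [a0 _] := @dist_inhab _ _ (mumin (s_tri M)) (mm1 _).
have gg := gamma_ge0 M.
have le_min : forall k s a, Qmin Qk s a <= Qk k s a.
  by move=> k s a; rewrite /Qmin; exact: bigmin_le.
have ex_min : forall s a, exists k, Qmin Qk s a = Qk k s a.
  move=> s a; exists [arg min_(i < Ordinal K0) Qk i s a]%O.
  by rewrite /Qmin (bigmin_eq_arg _ (Ordinal K0))// => i _; rewrite leey.
have HQk : forall k s a, safe M s -> 0 <= Qk k s a <= (gamma M)%:E.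
  by move=> k s a ss; have [_ _ /(_ s a ss) []] := Hk k.
have HQ : forall s a, safe M s -> 0 <= Qmin Qk s a <= (gamma M)%:E.
  by move=> s a ss; have [k ->] := ex_min s a; exact: HQk.
split => // s a ss; split; first exact: HQ.
have [k0 ek] := ex_min s a.
have [_ hk0 Hk0] := Hk k0; have [mk0 mk1] := hk0.
have [_ Hs] := Hk0 s a ss.
rewrite ek; apply: le_trans (_ : Qk k0 s a + (sig k0)%:E <= _); last first.
  rewrite leeD2l// lee_fin /sigmax.
  by rewrite (bigD1 k0)//= le_max lexx.
apply: le_trans Hs; rewrite leeD2l// lee_wpmul2l ?lee_fin// !EP_Ew.
apply: (Ew_le (P_ge0 M s a)) => s'.
  by rewrite Epol_Ew; apply: Ew_ge0 => // a'; have /andP[] := ext_01 M HQ s' a'.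
rewrite !Epol_Ew (@Ew_greedy _ _ (mumin s') (mm0 s') (mm1 s') _ (ext_01 M HQ s')); last first.
  by move=> a' /gr.
apply: le_trans (@mA_le_Ew _ _ (muk k0 s') (mk0 s') (mk1 s') _ (ext_01 M (HQk k0) s')).
apply: mA_mono => a'.
have [ss'|ns'] := boolP (safe M s'); first by rewrite !ext_safe.
by rewrite /ext; case: ifP => _ //; case: ifP.
Qed.

End part2s.

Theorem mainTheorem4 (R : realType) (S A : countType) (M : mdp R S A)
    (eta : R) (heta : (0 <= eta <= 1)%R) :
  (* (1) baseline policy *)
  (forall mu, is_policy mu ->
     admissible M 0 (Qpi M mu) mu eta /\
     (forall mup, is_policy mup -> greedy M (Qpi M mu) mup ->
        admissible M 0 (Qpi M mu) mup eta)) /\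
  (* (2) composite intervention *)
  (forall (K : nat) (Qk : 'I_K -> S -> A -> \bar R) (muk : 'I_K -> S -> A -> R)
          (sig : 'I_K -> R),
     (0 < K)%N -> (forall k, (0 <= sig k)%R) ->
     (forall k, admissible M (sig k) (Qk k) (muk k) eta) ->
     forall mumin, is_policy mumin -> greedy M (Qmin Qk) mumin ->
       admissible M (sigmax sig) (Qmin Qk) mumin eta) /\
  (* (3) value iteration *)
  (forall (sigma : R) Q mu, (0 <= sigma)%R -> admissible M sigma Q mu eta ->
     forall (k : nat) muk, is_policy muk -> greedy M (Titer M k Q) muk ->
       admissible M ((gamma M ^+ k) * sigma)%R (Titer M k Q) muk eta) /\
  (* (4) optimal intervention *)
  (forall pis, optimal M pis -> admissible M 0 (Qpi M pis) pis eta) /\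
  (* (5) approximation *)
  (forall (sigma delta : R) Q mu (Qhat : S -> A -> \bar R),
     (0 <= sigma)%R -> admissible M sigma Q mu eta ->
     (forall s a, safe M s -> 0 <= Qhat s a <= (gamma M)%:E) ->
     ereal_sup [set `|Qhat p.1 p.2 - Q p.1 p.2| | p in [set p : S * A | safe M p.1]]%classic
       <= delta%:E ->
     admissible M (sigma + (1 + gamma M) * delta)%R Qhat mu eta).
Proof.
split; [|split; [|split; [|split]]].
- move=> mu hmu; split; first exact: part1a.
  by move=> mup hmup gr; exact: part1b.
- move=> K Qk muk sig K0 sig0 Hk mumin hmin gr; exact: part2.
- move=> sigma Q mu s0 H k muk hmuk gr; exact: (@part3 _ _ _ M sigma Q mu eta s0 H k muk hmuk gr).
- by move=> pis [hpis _]; exact: part1a.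
- by move=> sigma delta Q mu Qhat s0 H Hh hs; exact: part5 hs.
Qed.
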